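(* Consider the scalar conservation law $u_t+H(u)_x=0$ and the following fully discrete nonstaggered Lagrangian–Eulerian scheme on a uniform mesh of spacing $h$ with cell averages $U_j^n$. For each $j$, let $U^n_{j-1/2}=\frac12(U^n_{j-1}+U^n_j)+\frac18(U'_j-U'_{j-1})$, where $U'_j$ are slope-limited variations, let $f^n_{j\pm1/2}=H(U^n_{j\pm1/2})/U^n_{j\pm1/2}$ (assuming $U^n_{j\pm1/2}\neq0$), $f^+=\max(f,0)$, $f^-=\max(-f,0)$, and define $$h_j^{n+1}=h+(f^n_{j+1/2}-f^n_{j-1/2})\Delta t,\qquad \overline U_j^{n+1}=\frac{h}{h_j^{n+1}}U_j^n,$$ $$U_j^{n+1}=\frac1h\Big(c_{-1,j}\overline U^{n+1}_{j-1}+c_{0,j}\overline U^{n+1}_j+c_{+1,j}\overline U^{n+1}_{j+1}\Big),$$ with $c_{-1,j}=f^+(U^n_{j-1/2})\Delta t=\max(f^n_{j-1/2},0)\Delta t$, $c_{+1,j}=f^-(U^n_{j+1/2})\Delta t=\max(-f^n_{j+1/2},0)\Delta t$ and $c_{0,j}=h-c_{-1,j}-c_{+1,j}$. Then, taking the limit $\Delta t\to0$, the scheme yields the ODE $$U_t=\frac1h\Big(U_{j-1}f^+_{j-\frac12}-U_jf^-_{j-\frac12}-U_jf^+_{j+\frac12}+U_{j+1}f^-_{j+\frac12}\Big),$$ where $U_j=U_j(t)$, $f^\pm_{j\pm1/2}=f^\pm(U_{j\pm1/2})$ and $U_t=\lim_{\Delta t\to0}\frac{U_j^{n+1}-U_j^n}{\Delta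 t}$; that is, the scheme is compatible with this ODE.
   Context: The quantities $f^n_{j\pm1/2}$ approximate the slopes of the ''no-flow curves'' bounding the Lagrangian–Eulerian control volumes; $h_j^{n+1}$ is the width of the evolved cell and $\overline U_j^{n+1}$ the conserved average on it, which is then projected back to the original mesh. *)

(* Defs.v *)
From mathcomp Require Import all_boot all_order all_algebra.
From mathcomp Require Import all_classical all_reals all_analysis.
Set Implicit Arguments. Unset Strict Implicit. Unset Printing Implicit Defensive.
Import Order.TTheory GRing.Theory Num.Theory.
Local Open Scope ring_scope.

(* Cell index j : int.  Interface j-1/2 is encoded by the integer j. *)
Section LE.
Variables (R : realType) (H : R -> R) (h : R) (U Up : int -> R).

Definition Uhalf (j : int) : R :=
  (U (j - 1) + U j) / 2 + (Up j - Up (j - 1)) / 8.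

Definition fhalf (j : int) : R := H (Uhalf j) / Uhalf j.

Definition fplus (f : R) : R := Num.max f 0.
Definition fminus (f : R) : R := Num.max (- f) 0.

Variable dt : R.

Definition hnew (j : int) : R := h + (fhalf (j + 1) - fhalf j) * dt.
Definition Ubar (j : int) : R := h / hnew j * U j.
Definition cm1 (j : int) : R := fplus (fhalf j) * dt.
Definition cp1 (j : int) : R := fminus (fhalf (j + 1)) * dt.
Definition c0 (j : int) : R := h - cm1 j - cp1 j.
Definition Unew (j : int) : R :=
  h^-1 * (cm1 j * Ubar (j - 1) + c0 j * Ubar j + cp1 j * Ubar (j + 1)).
End LE.

Definition ode_rhs (R : realType) (H : R -> R) (h : R) (U Up : int -> R)
  (j : int) : R :=
  h^-1 * (U (j - 1) * fplus (fhalf H U Up j)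
          - U j * fminus (fhalf H U Up j)
          - U j * fplus (fhalf H U Up (j + 1))
          + U (j + 1) * fminus (fhalf H U Up (j + 1))).

(* Main.v *)
Require Import Defs.
From mathcomp Require Import all_boot all_order all_algebra.
From mathcomp Require Import all_classical all_reals all_analysis.
From mathcomp Require Import ring lra.
Import Order.TTheory GRing.Theory Num.Theory.
Import numFieldNormedType.Exports.
Local Open Scope classical_set_scope.
Local Open Scope ring_scope.

Lemma lin_cvg (R : realType) (h c : R) :
  (fun dt : R => h + c * dt) @ 0^'+ --> h.
Proof.
apply: cvg_at_right_filter.
rewrite -[X in _ --> X]addr0 -[X in _ --> _ + X](mulr0 c).
apply: cvgD; first exact: cvg_cst.
apply: cvgM; first exact: cvg_cst.
exact: cvg_id.
Qed.

Lemma inv_cvg (R : realType) (h c a : R) : 0 < h ->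
  (fun dt : R => a / (h + c * dt)) @ 0^'+ --> a / h.
Proof.
move=> hp.
apply: cvgM; first exact: cvg_cst.
apply: cvgV; first by rewrite gt_eqF.
exact: lin_cvg.
Qed.

Lemma lin_pos (R : realType) (h c : R) : 0 < h ->
  \forall dt \near 0^'+, 0 < h + c * dt.
Proof. move=> hp; exact: (cvgr_gt h (lin_cvg R h c) 0 hp). Qed.

Lemma fpm {R : realType} (x : R) : fplus x - fminus x = x.
Proof.
rewrite /fplus /fminus /Num.max.
case: ifP => h1; case: ifP => h2; lra.
Qed.

Theorem proposition2 (R : realType) (H : R -> R) (h : R) (U Up : int -> R)
  (j : int) :
  0 < h ->
  (forall k : int, Uhalf U Up k != 0) ->
  (fun dt : R => (Unew H h U Up dt j - U j) / dt) @ 0^'+ -->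
    ode_rhs H h U Up j.
Proof.
move=> hp _.
set a := fhalf H U Up j; set b := fhalf H U Up (j + 1).
set p := fplus a; set m := fminus b.
set c1 := fhalf H U Up (j - 1 + 1) - fhalf H U Up (j - 1).
set c2 := fhalf H U Up (j + 1 + 1) - fhalf H U Up (j + 1).
pose g := fun dt : R => (p * U (j - 1)) / (h + c1 * dt)
   + (m * U (j + 1)) / (h + c2 * dt) - (U j * (p + m + b - a)) / (h + (b - a) * dt).
have -> : ode_rhs H h U Up j = (p * U (j - 1)) / h + (m * U (j + 1)) / h
    - (U j * (p + m + b - a)) / h.
  rewrite /ode_rhs -/a -/b -/p -/m.
  rewrite (_ : p + m + b - a = fplus b + fminus a); last first.
    by move: (fpm a) (fpm b); rewrite -/p -/m; lra.
  field; by rewrite gt_eqF.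
apply: cvg_trans (_ : g @ 0^'+ --> _).
  apply: near_eq_cvg.
  near=> dt.
  have dtp : 0 < dt by near: dt; exact: nbhs_right_gt.
  have h1 : 0 < h + c1 * dt by near: dt; exact: lin_pos.
  have h2 : 0 < h + c2 * dt by near: dt; exact: lin_pos.
  have h0 : 0 < h + (b - a) * dt by near: dt; exact: lin_pos.
  rewrite /g /Unew /Ubar /hnew /c0 /cp1 /cm1 -/a -/b -/p -/m -/c1 -/c2.
  field.
  by rewrite !gt_eqF.
apply: cvgB; first apply: cvgD; exact: inv_cvg.
Unshelve. all: by end_near.
Qed.
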